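(* Let $A$ be a synaptic algebra and let $p,q\in P$ be in generic position ($p\wedge q=p\wedge q^{\perp}=p^{\perp}\wedge q=p^{\perp}\wedge q^{\perp}=0$). Let $c:=(pqp+p^{\perp}q^{\perp}p^{\perp})^{1/2}$, let $u$ and $v$ be the symmetries of the polar decompositions of $p-q^{\perp}$ and $p-q$, respectively, and put $j:=uvp+pvu$ (so that $q=c^2p+csj+s^2p^{\perp}$ with $s:=(pq^{\perp}p+p^{\perp}qp^{\perp})^{1/2}$). Then an element $a\in A$ commutes with both $p$ and $q$ iff there exists $b\in C(c)$ such that $b=bp=pb$ and $a=b+jbj$.
   Context: Synaptic algebra (Foulis): $R$ is a real linear associative algebra with unit $1$, and $A\subseteq R$ is a real linear subspace with $1\in A$. For $a,b\in A$ write $aCb$ iff $ab=ba$; $C(a):=\{b\in A: aCb\}$; $CC(a):=\{b\in A: bCd \text{ for all } d\in C(a)\}$. $A$ is a synaptic algebra with enveloping algebra $R$ iff: (SA1) $A$ is a partially ordered archimedean real linear space with positive cone $A^+$, $1$ is an order unit, $\|\cdot\|$ the order-unit norm; (SA2) $a\in A\Rightarrow a^2\in A^+$; (SA3) $a,b\in A^+\Rightarrow aba\in A^+$; (SA4) if $a\in A$, $b\in A^+$, $aba=0$ then $ab=ba=0$; (SA5) if $a\in A^+$ there is $b\in A^+\cap CC(a)$ with $b^2=a$; (SA6) for $a\in A$ there is $p=p^2\in A$ with $ab=0\Leftrightarrow pb=0$ for all $b\in A$; (SA7) if $1\le a$ there is $b\in A$ with $ab=ba=1$; (SA8) if $a,b\in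 A$, $a_1\le a_2\le\cdots$ are pairwise commuting elements of $C(b)$ with $\|a-a_n\|\to0$, then $a\in C(b)$. $A$ is nondegenerate. Products are computed in $R$. $P:=\{p\in A:p=p^2\}$ with inherited order is an orthomodular lattice with $p^{\perp}:=1-p$, meet $\wedge$, join $\vee$. For $0\le a$, $a^{1/2}$ is its unique positive square root in $A$, $|a|:=(a^2)^{1/2}$; $a^{\circ}$ is the carrier of $a$ (the unique projection with $ab=0\Leftrightarrow a^{\circ}b=0$ for all $b\in A$). A symmetry is $u\in A$ with $u^2=1$. For $a\in A$, the signum $t$ of $a$ is the partial symmetry with $t^2=a^{\circ}$, $t\in CC(a)$, $a=|a|t=t|a|$; the symmetry of the polar decomposition of $a$ is $t+(a^{\circ})^{\perp}$. *)

(* Defs.v *)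
From HB Require Import structures.
From mathcomp Require Import all_boot all_order all_algebra.
From mathcomp Require Import boolp classical_sets reals.
Set Implicit Arguments. Unset Strict Implicit. Unset Printing Implicit Defensive.
Import Order.TTheory GRing.Theory Num.Theory.
Local Open Scope ring_scope.
Local Open Scope classical_set_scope.

(* The real numbers are an abstract [realType] K
   (complete archimedean ordered field); the enveloping algebra is a real
   associative unital algebra [E : algType K]; A is a subset of E (a predicate)
   and [pos] is the positive cone A^+ (a subset of A). *)

Section Synaptic.
Variables (K : realType) (E : algType K).
Variables (A pos : E -> Prop).

Definition sle (a b : E) : Prop := pos (b - a).

Definition Ccom (a : E) (b : E) : Prop := A b /\ a * b = b * a.
Definition CCcom (a : E) (b : E) : Prop :=
  A b /\ forall d, Ccom a d -> b * d = d * b.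

Definition onorm (a : E) : K :=
  inf [set l : K | 0 < l /\ sle (- (l *: 1)) a /\ sle a (l *: 1)].

Record synaptic : Prop := Synaptic {
  sa_0 : A 0;
  sa_add : forall a b, A a -> A b -> A (a + b);
  sa_scale : forall (r : K) a, A a -> A (r *: a);
  sa_1 : A 1;
  sa_pos_sub : forall a, pos a -> A a;
  sa_pos_add : forall a b, pos a -> pos b -> pos (a + b);
  sa_pos_scale : forall (r : K) a, 0 <= r -> pos a -> pos (r *: a);
  sa_pos_antisym : forall a, pos a -> pos (- a) -> a = 0;
  sa_archimedean : forall a b, A a -> A b ->
      (forall n : nat, sle (n%:R *: a) b) -> sle a 0;
  sa_order_unit : forall a, A a ->
      exists l : K, 0 < l /\ sle (- (l *: 1)) a /\ sle a (l *: 1);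
  sa2 : forall a, A a -> pos (a * a);
  sa3 : forall a b, pos a -> pos b -> pos (a * b * a);
  sa4 : forall a b, A a -> pos b -> a * b * a = 0 ->
      a * b = 0 /\ b * a = 0;
  sa5 : forall a, pos a -> exists b, pos b /\ CCcom a b /\ b * b = a;
  sa6 : forall a, A a -> exists p, A p /\ p = p * p /\
      (forall b, A b -> (a * b = 0 <-> p * b = 0));
  sa7 : forall a, A a -> sle 1 a -> exists b, A b /\ a * b = 1 /\ b * a = 1;
  sa8 : forall (a b : E) (s : nat -> E), A a -> A b ->
      (forall n, Ccom b (s n)) ->
      (forall n, sle (s n) (s n.+1)) ->
      (forall m n, s m * s n = s n * s m) ->
      (forall e : K, 0 < e -> exists N, forall n, (N <= n)%N -> onorm (a - s n) < e) ->
      Ccom b a;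
  sa_nondeg : (1 : E) <> 0
}.

Definition proj (p : E) : Prop := A p /\ p = p * p.

Definition proj_meet (p q m : E) : Prop :=
  proj m /\ sle m p /\ sle m q /\
  forall r, proj r -> sle r p -> sle r q -> sle r m.

Definition is_sqrt (a b : E) : Prop := pos b /\ b * b = a.

Definition is_abs (a x : E) : Prop := is_sqrt (a * a) x.

Definition is_carrier (a e : E) : Prop :=
  proj e /\ forall b, A b -> (a * b = 0 <-> e * b = 0).

Definition is_signum (a t : E) : Prop :=
  A t /\ exists e x, is_carrier a e /\ t * t = e /\ CCcom a t /\
    is_abs a x /\ a = x * t /\ a = t * x.

Definition is_polar_symmetry (a u : E) : Prop :=
  exists t e, is_signum a t /\ is_carrier a e /\ u = t + (1 - e).

End Synaptic.

(* Main.v *)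
Require Import Defs.
From mathcomp Require Import all_boot all_order all_algebra.
From mathcomp Require Import boolp classical_sets reals.
Import Order.TTheory GRing.Theory Num.Theory.
Local Open Scope ring_scope.
Set Implicit Arguments. Unset Strict Implicit.


Inductive gexp := GAtom of nat | GZero | GAdd of gexp & gexp | GOpp of gexp.

Section Abel.
Variable V : zmodType.
Fixpoint geval (env : seq V) (t : gexp) : V :=
  match t with
  | GAtom n => nth 0 env n
  | GZero => 0
  | GAdd a b => geval env a + geval env b
  | GOpp a => - geval env a
  end.
Fixpoint gcoef (t : gexp) (n : nat) : int :=
  match t with
  | GAtom m => if m == n then 1 else 0
  | GZero => 0
  | GAdd a b => gcoef a n + gcoef b n
  | GOpp a => - gcoef a n
  end.
Fixpoint gbound (t : gexp) : nat :=
  match t with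
  | GAtom n => n.+1
  | GZero => 0
  | GAdd a b => maxn (gbound a) (gbound b)
  | GOpp a => gbound a
  end.

Lemma geval_sum env t N : (gbound t <= N)%N ->
  geval env t = \sum_(i < N) (nth 0 env i) *~ gcoef t i.
Proof.
elim: t => [n|| a iha b ihb | a iha] /= hN.
- rewrite (bigD1 (Ordinal hN)) //= eqxx mulr1z big1 ?addr0 // => i hi.
  by case: eqP => // e; move: hi; rewrite -val_eqE /= e eqxx.
- by rewrite big1 // => i _; rewrite mulr0z.
- rewrite geq_max in hN; case/andP: hN => ha hb.
  by rewrite iha // ihb // -big_split /=; apply: eq_bigr => i _; rewrite mulrzDr.
- by rewrite iha // -sumrN; apply: eq_bigr => i _; rewrite mulrNz.
Qed.

Definition gcheck (a b : gexp) : bool :=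
  all (fun i => gcoef a i == gcoef b i) (iota 0 (maxn (gbound a) (gbound b))).

Lemma gcheck_sound env a b : gcheck a b = true -> geval env a = geval env b.
Proof.
move=> h; set N := maxn (gbound a) (gbound b).
rewrite (@geval_sum env a N) ?leq_maxl // (@geval_sum env b N) ?leq_maxr //.
apply: eq_bigr => i _; move/allP: h => /(_ i); rewrite mem_iota /= add0n ltn_ord.
by move=> /(_ isT) /eqP ->.
Qed.
End Abel.

Ltac gmem x l := match l with
  | nil => constr:(false)
  | ?y :: ?l' => match constr:(tt) with
     | _ => let _ := type_term (@erefl _ x : x = y) in constr:(true)
     | _ => gmem x l' end
  end.
Ltac gatoms t l := match t with
  | ?a + ?b => let l1 := gatoms a l in gatoms b l1
  | - ?a => gatoms a l
  | 0 => l
  | _ => let b := gmem t l in match b with true => l | false => constr:(t :: l) end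
  end.
Ltac glookup x l := match l with
  | ?y :: ?l' => match constr:(tt) with
     | _ => let _ := type_term (@erefl _ x : x = y) in constr:(0%N)
     | _ => let n := glookup x l' in constr:(n.+1) end
  end.
Ltac greify t l := match t with
  | ?a + ?b => let ra := greify a l in let rb := greify b l in constr:(GAdd ra rb)
  | - ?a => let ra := greify a l in constr:(GOpp ra)
  | 0 => constr:(GZero)
  | _ => let n := glookup t l in constr:(GAtom n)
  end.
Ltac abel := match goal with
  | |- @eq ?T ?L ?R =>
    let l0 := constr:(@nil T) in
    let l1 := gatoms L l0 in let l := gatoms R l1 in
    let rl := greify L l in let rr := greify R l in
    exact (@gcheck_sound _ l rl rr (erefl true))
  end.


Ltac rexp := repeat progress rewrite ?mulrDl ?mulrDr ?mulNr ?mulrN ?opprK ?opprD ?mulr1 ?mul1r ?mulr0 ?mul0r ?mulrA ?addr0 ?add0r ?oppr0.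

Section S.
Variables (K : realType) (E : algType K) (A pos : E -> Prop).
Hypothesis HA : synaptic A pos.

Lemma A_opp x : A x -> A (- x).
Proof. move=> h; have -> : - x = (-1 : K) *: x by rewrite scaleN1r.
exact: (sa_scale HA). Qed.
Lemma A_add x y : A x -> A y -> A (x + y).
Proof. exact: (sa_add HA). Qed.
Lemma A_sub x y : A x -> A y -> A (x - y).
Proof. by move=> hx hy; apply: A_add => //; apply: A_opp. Qed.
Lemma A1 : A 1. Proof. exact: (sa_1 HA). Qed.
Lemma A_pos x : pos x -> A x. Proof. exact: (sa_pos_sub HA). Qed.
Lemma A_sq x : A x -> A (x * x). Proof. by move=> h; apply: A_pos; apply: (sa2 HA h). Qed.
Lemma pos1 : pos 1. Proof. by have := sa2 HA A1; rewrite mulr1. Qed.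
Lemma sq0 x : A x -> x * x = 0 -> x = 0.
Proof. move=> hx h; have [] := sa4 HA hx pos1 (_ : x * 1 * x = 0); rewrite ?mulr1 //. Qed.

Lemma A_jordan x y : A x -> A y -> A (x * y + y * x).
Proof.
move=> hx hy.
have -> : x * y + y * x = (x + y) * (x + y) - x * x - y * y.
  by rexp; abel.
by apply: A_sub; [apply: A_sub|]; apply: A_sq => //; apply: A_add.
Qed.

Lemma A_half x : A (x + x) -> A x.
Proof.
move=> h.
have -> : x = (2%:R^-1 : K) *: (x + x).
  by rewrite -mulr2n -scaler_nat scalerA mulVf ?scale1r // pnatr_eq0.
exact: (sa_scale HA).
Qed.

Lemma A_mulC x y : A x -> A y -> x * y = y * x -> A (x * y).
Proof. by move=> hx hy h; apply: A_half; rewrite {2}h; apply: A_jordan. Qed.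

Lemma A_U x y : A x -> A y -> A (x * y * x).
Proof.
move=> hx hy; apply: A_half.
have -> : x * y * x + x * y * x =
   (x * y + y * x) * x + x * (x * y + y * x) - ((x * x) * y + y * (x * x)).
  by rexp; abel.
apply: A_sub; last by apply: A_jordan => //; apply: A_sq.
by apply: A_jordan => //; apply: A_jordan.
Qed.

Lemma mulT x y : A x -> A y -> x * y = 0 -> y * x = 0.
Proof.
move=> hx hy h.
have hz : A (x * y + y * x) by apply: A_jordan.
rewrite h add0r in hz.
apply: sq0 => //.
by rewrite mulrA -(mulrA y) h mulr0 mul0r.
Qed.


Lemma pos_mulC x y : pos x -> pos y -> x * y = y * x -> pos (x * y).
Proof.
move=> px py hxy.
have [r [pr [[Ar CCr] rr]]] := sa5 HA px.
have ry : r * y = y * r by apply: CCr; split => //; apply: A_pos.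
have -> : x * y = r * y * r by rewrite -rr -!mulrA ry.
exact: (sa3 HA).
Qed.

Lemma sqrt_eq_b m b c : pos b -> (forall d, Ccom A m d -> b * d = d * b) ->
  b * b = m -> pos c -> c * c = m -> c = b.
Proof.
move=> pb CCb bb pc cc.
have Ab := A_pos pb; have Ac := A_pos pc.
have bc : b * c = c * b by apply: CCb; split => //; rewrite -cc mulrA.
set z := b - c.
have Az : A z by apply: A_sub.
have pz2 : pos (z * z) by apply: (sa2 HA).
have bz : b * z = z * b by rewrite /z mulrDr mulrDl mulrN mulNr bc.
have cz : c * z = z * c by rewrite /z mulrDr mulrDl mulrN mulNr bc.
have bz2 : b * (z * z) = (z * z) * b by rewrite mulrA bz -mulrA bz mulrA.
have cz2 : c * (z * z) = (z * z) * c by rewrite mulrA cz -mulrA cz mulrA.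
have p1 := pos_mulC pb pz2 bz2.
have p2 := pos_mulC pc pz2 cz2.
have s0 : b * (z * z) + c * (z * z) = 0.
  rewrite -mulrDl mulrA.
  have -> : (b + c) * z = 0 by rewrite /z; rexp; rewrite bc bb cc; abel.
  by rewrite mul0r.
have e1 : b * (z * z) = 0.
  apply: (sa_pos_antisym HA) => //.
  by have -> : - (b * (z * z)) = c * (z * z) by apply/eqP; rewrite eq_sym -addr_eq0 addrC s0.
have e2 : c * (z * z) = 0 by move: s0; rewrite e1 add0r.
have e3 : z * (z * z) = 0 by rewrite /z mulrDl mulNr e1 e2 subrr.
have e4 : z * z = 0.
  by apply: sq0; [apply: A_sq | rewrite -mulrA e3 mulr0].
have : z = 0 by apply: sq0.
by rewrite /z => /eqP; rewrite subr_eq0 => /eqP.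
Qed.

Lemma sqrt_CC c : pos c -> forall d, A d -> (c * c) * d = d * (c * c) -> c * d = d * c.
Proof.
move=> pc d Ad h.
have [b [pb [[Ab CCb] bb]]] := sa5 HA (sa2 HA (A_pos pc)).
have -> : c = b by apply: (sqrt_eq_b pb CCb bb pc).
by apply: CCb.
Qed.

Lemma sqrt_uniq c1 c2 : pos c1 -> pos c2 -> c1 * c1 = c2 * c2 -> c1 = c2.
Proof.
move=> p1 p2 h.
have [b [pb [[Ab CCb] bb]]] := sa5 HA (sa2 HA (A_pos p1)).
rewrite (sqrt_eq_b pb CCb bb p1 erefl).
by symmetry; apply: (sqrt_eq_b pb CCb bb p2).
Qed.

Lemma proj_pos x : A x -> x * x = x -> pos x.
Proof. by move=> Ax h; rewrite -h; apply: (sa2 HA). Qed.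

Lemma meet0 P Q g : proj_meet A pos P Q 0 -> A g -> g * g = g ->
  pos (P - g) -> pos (Q - g) -> g = 0.
Proof.
move=> [_ [_ [_ H]]] Ag gg hP hQ.
have := H g (conj Ag (esym gg)) hP hQ.
rewrite /sle add0r => hn.
by apply: (sa_pos_antisym HA) => //; apply: proj_pos.
Qed.

Lemma ker_facts a e : A a -> is_carrier A a e ->
  [/\ A (1 - e), (1 - e) * (1 - e) = 1 - e, a * (1 - e) = 0 &
   (forall y, A y -> a * y = 0 -> (1 - e) * y = y /\ y * (1 - e) = y)].
Proof.
move=> Aa [[Ae ee] H].
have Af : A (1 - e) by apply: A_sub => //; apply: A1.
have ff : (1 - e) * (1 - e) = 1 - e by rexp; rewrite -ee; abel.
have ef : e * (1 - e) = 0 by rexp; rewrite -ee subrr.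
split => //; first by apply/H.
move=> y Ay ay.
have ey : e * y = 0 by apply/H.
have ye : y * e = 0 by apply: mulT.
by split; rexp; rewrite ?ey ?ye; abel.
Qed.

Lemma ker_comm a e P Q : A a -> is_carrier A a e -> A P -> a * P = Q * a ->
  (1 - e) * P = P * (1 - e).
Proof.
move=> Aa ca AP aP.
have [Af ff af H] := ker_facts Aa ca.
set f := 1 - e in Af ff af H *.
clearbody f.
have Ay : A (P * f + f * P) by apply: A_jordan.
have ay : a * (P * f + f * P) = 0.
  by rewrite mulrDr !mulrA aP -mulrA af mulr0 mul0r addr0.
have [h1 h2] := H _ Ay ay.
have ffx : forall x, x * f * f = x * f by move=> x; rewrite -mulrA ff.
move: h1 h2; rexp; rewrite ?ffx ?ff => h1 h2.
have e1 : f * P * f = P * f by apply: (addIr (f * P)).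
have e2 : f * P * f = f * P by apply: (addrI (P * f)).
by rewrite -e1 e2.
Qed.

Lemma proj_prod x y : A x -> A y -> x * x = x -> y * y = y -> x * y = y * x ->
  A (x * y) /\ (x * y) * (x * y) = x * y.
Proof.
move=> Ax Ay xx yy xy; split; first exact: A_mulC.
by rewrite mulrA -(mulrA x) -xy mulrA xx -mulrA yy.
Qed.

Lemma proj_prod_pos x y : A x -> A y -> x * x = x -> y * y = y -> x * y = y * x ->
  pos (x * y).
Proof. by move=> Ax Ay xx yy xy; have [h1 h2] := proj_prod Ax Ay xx yy xy; apply: proj_pos. Qed.

Section Ident.
Variables p q : E.
Hypotheses (pp : p * p = p) (qq : q * q = q).
Let ppx x : x * p * p = x * p. Proof. by rewrite -mulrA pp. Qed.
Let qqx x : x * q * q = x * q. Proof. by rewrite -mulrA qq. Qed.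
Ltac nrm := rexp; repeat progress rewrite ?ppx ?qqx ?pp ?qq.

Lemma I1 : (p - (1 - q)) * p = q * (p - (1 - q)). Proof. by nrm; abel. Qed.
Lemma I2 : (p - (1 - q)) * q = p * (p - (1 - q)). Proof. by nrm; abel. Qed.
Lemma I3 : (p - q) * p = (1 - q) * (p - q). Proof. by nrm; abel. Qed.
Lemma I4 : (p - q) * q = (1 - p) * (p - q). Proof. by nrm; abel. Qed.
Lemma I5 : p * q * p + (1 - p) * (1 - q) * (1 - p) = (p - (1 - q)) * (p - (1 - q)).
Proof. by nrm; abel. Qed.
Lemma I6 : (p - (1 - q)) * (p - (1 - q)) + (p - q) * (p - q) = 1.
Proof. by nrm; abel. Qed.
Lemma I7 : (p - (1 - q)) * (p - q) + (p - q) * (p - (1 - q)) = 0.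
Proof. by nrm; abel. Qed.
Lemma I9 : (p - q) * (1 - q) = p * (p - q). Proof. by nrm; abel. Qed.
Lemma I10 : (p - q) * (1 - p) = q * (p - q). Proof. by nrm; abel. Qed.
Lemma I11 : q = (p - (1 - q)) * (p - (1 - q)) * p + (q * p - p * q) * (p - (1 - p))
   + (p - q) * (p - q) * (1 - p).
Proof. by nrm; abel. Qed.
Lemma I8 : (p - (1 - q)) * (p - q) = q * p - p * q.
Proof. by nrm; abel. Qed.
End Ident.

Lemma sub_eq1 (e : E) : 1 - e = 0 -> e = 1.
Proof. by move/eqP; rewrite subr_eq0 eq_sym => /eqP. Qed.

Section Gen.
Variables p q : E.
Hypotheses (Ap : A p) (Aq : A q) (pp : p * p = p) (qq : q * q = q).
Let ppx x : x * p * p = x * p. Proof. by rewrite -mulrA pp. Qed.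
Let qqx x : x * q * q = x * q. Proof. by rewrite -mulrA qq. Qed.
Let A1p : A (1 - p). Proof. by apply: A_sub => //; apply: A1. Qed.
Let A1q : A (1 - q). Proof. by apply: A_sub => //; apply: A1. Qed.
Let pp' : (1 - p) * (1 - p) = 1 - p. Proof. by rexp; rewrite pp; abel. Qed.
Let qq' : (1 - q) * (1 - q) = 1 - q. Proof. by rexp; rewrite qq; abel. Qed.

Lemma ee_carrier e : proj_meet A pos p (1 - q) 0 -> proj_meet A pos (1 - p) q 0 ->
  is_carrier A (p - (1 - q)) e -> e = 1.
Proof.
move=> g2 g3 ce.
have Aee : A (p - (1 - q)) by apply: A_sub.
have [Af ff af H] := ker_facts Aee ce.
have fp := ker_comm Aee ce Ap (I1 pp qq).
have fq := ker_comm Aee ce Aq (I2 pp qq).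
apply: sub_eq1; set f := 1 - e in Af ff af H fp fq *; clearbody f.
have ffx x : x * f * f = x * f by rewrite -mulrA ff.
have Af' : A (1 - f) by apply: A_sub => //; apply: A1.
have ff' : (1 - f) * (1 - f) = 1 - f by rexp; rewrite ff; abel.
have af' : p * f - f + q * f = 0 by move: af; rexp; move=> <-; abel.
have e1 : p * f = 0.
  have [Ag gg] := proj_prod Ap Af pp ff (esym fp).
  apply: (meet0 g2) => //.
    have -> : p - p * f = p * (1 - f) by rexp.
    by apply: proj_prod_pos => //; rexp; rewrite ?fq ?fp; abel.
  have -> : 1 - q - p * f = (1 - q) * (1 - f).
    have -> : p * f = f - q * f by apply/eqP; rewrite -subr_eq0 -af'; apply/eqP; abel.
    by rexp; abel.
  by apply: proj_prod_pos => //; rexp; rewrite ?fq ?fp; abel.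
have e2 : q * f = f by move: af'; rewrite e1 add0r => /eqP; rewrite addrC subr_eq0 => /eqP.
apply: (meet0 g3) => //.
  have -> : 1 - p - f = (1 - p) * (1 - f) by rexp; rewrite e1; abel.
  by apply: proj_prod_pos => //; rexp; rewrite ?fq ?fp; abel.
have -> : q - f = q * (1 - f) by rexp; rewrite e2.
by apply: proj_prod_pos => //; rexp; rewrite ?fq ?fp; abel.
Qed.

Lemma dd_carrier e : proj_meet A pos p q 0 -> proj_meet A pos (1 - p) (1 - q) 0 ->
  is_carrier A (p - q) e -> e = 1.
Proof.
move=> g1 g4 ce.
have Add : A (p - q) by apply: A_sub.
have [Af ff af H] := ker_facts Add ce.
have fp := ker_comm Add ce Ap (I3 pp qq).
have fq := ker_comm Add ce Aq (I4 pp qq).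
apply: sub_eq1; set f := 1 - e in Af ff af H fp fq *; clearbody f.
have Af' : A (1 - f) by apply: A_sub => //; apply: A1.
have ff' : (1 - f) * (1 - f) = 1 - f by rexp; rewrite ff; abel.
have af' : p * f = q * f by apply/eqP; rewrite -subr_eq0 -af; rexp.
have e1 : p * f = 0.
  have [Ag gg] := proj_prod Ap Af pp ff (esym fp).
  apply: (meet0 g1) => //.
    have -> : p - p * f = p * (1 - f) by rexp.
    by apply: proj_prod_pos => //; rexp; rewrite ?fq ?fp; abel.
  have -> : q - p * f = q * (1 - f) by rewrite af'; rexp.
  by apply: proj_prod_pos => //; rexp; rewrite ?fq ?fp; abel.
have e2 : q * f = 0 by rewrite -af'.
apply: (meet0 g4) => //.
  have -> : 1 - p - f = (1 - p) * (1 - f) by rexp; rewrite e1; abel.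
  by apply: proj_prod_pos => //; rexp; rewrite ?fq ?fp; abel.
have -> : 1 - q - f = (1 - q) * (1 - f) by rexp; rewrite e2; abel.
by apply: proj_prod_pos => //; rexp; rewrite ?fq ?fp; abel.
Qed.

End Gen.

Lemma kill x : A x -> (forall e, is_carrier A x e -> e = 1) ->
  forall y, A y -> x * y = 0 -> y = 0.
Proof.
move=> Ax H y Ay h.
have [e [Ae [ee He]]] := sa6 HA Ax.
have ce : is_carrier A x e by split => //; split.
have e1 := H e ce; move/(He y Ay): h; by rewrite e1 mul1r.
Qed.

Lemma polar_facts x u r : A x -> (forall e, is_carrier A x e -> e = 1) ->
  is_polar_symmetry A pos x u -> pos r -> r * r = x * x ->
  [/\ A u, u * u = 1, (forall d, A d -> x * d = d * x -> u * d = d * u),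
      x = r * u & x = u * r].
Proof.
move=> Ax H [t [e [[At [e2 [y [ce2 [tt [[_ CCt] [[py yy] [xyt xty]]]]]]]] [ce ->]]]] pr rr.
rewrite (H e ce) subrr addr0.
have yr : y = r by apply: sqrt_uniq => //; rewrite yy rr.
rewrite yr in xyt xty.
split => //; first by rewrite tt; apply: H.
by move=> d Ad xd; apply: CCt; split.
Qed.

Lemma comm3 (x y z d : E) : x * d = d * x -> y * d = d * y -> z * d = d * z ->
  x * y * z * d = d * (x * y * z).
Proof. by move=> h1 h2 h3; rewrite -!mulrA h3 !mulrA -(mulrA x) h2 mulrA h1. Qed.

Lemma final_comm (al be ga b j p : E) :
  al * b = b * al -> be * b = b * be -> ga * b = b * ga ->
  al * j = j * al -> be * j = j * be -> ga * j = j * ga ->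
  j * j = 1 -> j * p = (1 - p) * j -> p * j = j * (1 - p) ->
  b * p = b -> p * b = b ->
  (al * p + ga * j + be * (1 - p)) * (b + j * b * j) =
  (b + j * b * j) * (al * p + ga * j + be * (1 - p)).
Proof.
move=> ab bb gb aj bj gj jj jp pj bp pb.
have b1p : b * (1 - p) = 0 by rewrite mulrBr mulr1 bp subrr.
have p1b : (1 - p) * b = 0 by rewrite mulrBl mul1r pb subrr.
move: (1 - p) b1p p1b jp pj => P' b1p p1b jp pj.
have comj x : x * b = b * x -> x * j = j * x -> x * (j * b * j) = (j * b * j) * x.
  by move=> h1 h2; symmetry; apply: comm3; symmetry.
have L1 : (al * p + ga * j + be * P') * b = al * b + ga * (j * b).
  by rewrite !mulrDl -!mulrA pb p1b mulr0 addr0.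
have L2 : (al * p + ga * j + be * P') * (j * b * j) = ga * (b * j) + be * (j * b * j).
  rewrite !mulrDl -!(mulrA al) -!(mulrA ga) -!(mulrA be).
  have -> : p * (j * b * j) = 0 by rewrite !mulrA pj -(mulrA j) p1b mulr0 !mul0r.
  have -> : j * (j * b * j) = b * j by rewrite !mulrA jj mul1r.
  have -> : P' * (j * b * j) = j * b * j by rewrite !mulrA -jp -(mulrA j p) pb.
  by rewrite mulr0 add0r.
have R1 : b * (al * p + ga * j + be * P') = al * b + ga * (b * j).
  rewrite !mulrDr !mulrA -ab -gb -bb -(mulrA al) bp -(mulrA be) b1p mulr0 addr0.
  done.
have R2 : (j * b * j) * (al * p + ga * j + be * P') = ga * (j * b) + be * (j * b * j).
  rewrite !mulrDr !mulrA -(comj al) // -(comj ga) // -(comj be) //.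
  rewrite -(mulrA al) -(mulrA ga) -(mulrA be).
  have -> : j * b * j * p = 0 by rewrite -(mulrA _ j p) jp mulrA -(mulrA j b) b1p mulr0 mul0r.
  have -> : j * b * j * j = j * b by rewrite -mulrA jj mulr1.
  have -> : j * b * j * P' = j * b * j by rewrite -(mulrA _ j) -pj mulrA -(mulrA j b p) bp.
  by rewrite mulr0 add0r !mulrA.
rewrite [LHS]mulrDr [RHS]mulrDl L1 L2 R1 R2 !mulrA; abel.
Qed.

Lemma comm2 (x y d : E) : x * d = d * x -> y * d = d * y -> x * y * d = d * (x * y).
Proof. by move=> h1 h2; rewrite -mulrA h2 mulrA h1 mulrA. Qed.

Lemma comm_compl (x y d : E) : x + y = 1 -> y * d = d * y -> x * d = d * x.
Proof.
move=> h yd; have -> : x = 1 - y by rewrite -h addrK.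
by rewrite mulrBl mulrBr mul1r mulr1 yd.
Qed.

Lemma jfacts (w p : E) : p * p = p -> w * w = -1 -> w * p = (1 - p) * w ->
  let j := w * (p - (1 - p)) in
  [/\ j * j = 1, j * p = (1 - p) * j & p * j = j * (1 - p)].
Proof.
move=> pp ww wp j.
have wp' : w * p = w - p * w by rewrite wp mulrBl mul1r.
have ppx x : x * p * p = x * p by rewrite -mulrA pp.
have wwx x : x * w * w = - x by rewrite -mulrA ww mulrN mulr1.
have wpx x : x * w * p = x * w - x * p * w by rewrite -mulrA wp' mulrBr mulrA.
rewrite /j; split; rexp; do 6! (rewrite ?wpx ?wwx ?ppx ?wp' ?ww ?pp; rexp); abel.
Qed.

End S.

Unset Implicit Arguments.

Theorem theorem8p4 (K : realType) (E : algType K) (A pos : E -> Prop)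
  (HA : synaptic A pos) (p q : E) (Hp : proj A p) (Hq : proj A q)
  (g1 : proj_meet A pos p q 0) (g2 : proj_meet A pos p (1 - q) 0)
  (g3 : proj_meet A pos (1 - p) q 0) (g4 : proj_meet A pos (1 - p) (1 - q) 0)
  (c u v : E)
  (Hc : is_sqrt pos (p * q * p + (1 - p) * (1 - q) * (1 - p)) c)
  (Hu : is_polar_symmetry A pos (p - (1 - q)) u)
  (Hv : is_polar_symmetry A pos (p - q) v) :
  let j := u * v * p + p * v * u in
  forall a : E, A a ->
    ((a * p = p * a /\ a * q = q * a) <->
     exists b : E, Ccom A c b /\ b = b * p /\ b = p * b /\ a = b + j * b * j).
Proof.
move=> j a Aa.
case: Hp => Ap pp0; case: Hq => Aq qq0.
have pp : p * p = p by rewrite -pp0.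
have qq : q * q = q by rewrite -qq0.
have Aee : A (p - (1 - q)) by apply: (A_sub HA) => //; apply: (A_sub HA) => //; apply: (A1 HA).
have Add : A (p - q) by apply: (A_sub HA).
have Cee : forall e, is_carrier A (p - (1 - q)) e -> e = 1.
  by move=> e ce; apply: (ee_carrier HA Ap Aq pp qq g2 g3 ce).
have Cdd : forall e, is_carrier A (p - q) e -> e = 1.
  by move=> e ce; apply: (dd_carrier HA Ap Aq pp qq g1 g4 ce).
case: Hc => pc cc; rewrite (I5 pp qq) in cc.
have Ac : A c := A_pos HA pc.
have [s [ps [[As CCs] ss]]] := sa5 HA (sa2 HA Add).
have [Au uu uCC eecu eeuc] := polar_facts HA Aee Cee Hu pc cc.
have [Av vv vCC ddsv ddvs] := polar_facts HA Add Cdd Hv ps ss.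
have cCC : forall d, A d -> (p - (1 - q)) * (p - (1 - q)) * d = d * ((p - (1 - q)) * (p - (1 - q))) -> c * d = d * c.
  by move=> d Ad h; apply: (sqrt_CC HA pc) => //; rewrite cc.
have sCC : forall d, A d -> (p - q) * (p - q) * d = d * ((p - q) * (p - q)) -> s * d = d * s.
  by move=> d Ad h; apply: CCs; split.
have E6 := I6 pp qq.
have cp : c * p = p * c.
  by apply: cCC => //; rewrite -mulrA (I1 pp qq) mulrA (I2 pp qq) -mulrA.
have cq : c * q = q * c.
  by apply: cCC => //; rewrite -mulrA (I2 pp qq) mulrA (I1 pp qq) -mulrA.
have sp : s * p = p * s.
  by apply: sCC => //; rewrite -mulrA (I3 pp qq) [LHS]mulrA (I9 pp qq) -mulrA.
have sq : s * q = q * s.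
  by apply: sCC => //; rewrite -mulrA (I4 pp qq) [LHS]mulrA (I10 pp qq) -mulrA.
have cdd : c * (p - q) = (p - q) * c.
  by apply: cCC => //; apply: (comm_compl E6); rewrite mulrA.
have see : s * (p - (1 - q)) = (p - (1 - q)) * s.
  by apply: sCC => //; apply: comm_compl; [rewrite addrC; exact: E6 | rewrite mulrA].
have cee : c * (p - (1 - q)) = (p - (1 - q)) * c by apply: cCC => //; rewrite mulrA.
have sdd : s * (p - q) = (p - q) * s by apply: sCC => //; rewrite mulrA.
have cs : c * s = s * c.
  by apply: cCC => //; rewrite -mulrA -see mulrA -see -mulrA.
have uc : u * c = c * u by apply: uCC => //; rewrite cee.
have us : u * s = s * u by apply: uCC => //; rewrite see.
have vc : v * c = c * v by apply: vCC => //; rewrite cdd.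
have vs : v * s = s * v by apply: vCC => //; rewrite sdd.
have killee := kill HA Aee Cee.
have killdd := kill HA Add Cdd.
have Az : A (u * v + v * u) by apply: (A_jordan HA).
have sz : s * (u * v + v * u) = (u * v + v * u) * s.
  by rewrite mulrDr mulrDl (comm2 us vs) (comm2 vs us).
have h1 : (p - (1 - q)) * (p - q) = c * s * (u * v).
  by rewrite eecu ddsv !mulrA -(mulrA c u s) us !mulrA.
have h2 : (p - q) * (p - (1 - q)) = c * s * (v * u).
  by rewrite eecu ddsv !mulrA -(mulrA s v c) vc !mulrA cs.
have csz : c * (s * (u * v + v * u)) = 0.
  by rewrite mulrA mulrDr -h1 -h2 (I7 pp qq).
have Asz : A (s * (u * v + v * u)) by apply: (A_mulC HA).
have sz0 : s * (u * v + v * u) = 0.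
  by apply: killee => //; rewrite eeuc -mulrA csz mulr0.
have z0 : u * v + v * u = 0.
  by apply: killdd => //; rewrite ddvs -mulrA sz0 mulr0.
have vu : v * u = - (u * v).
  by apply/eqP; rewrite -addr_eq0 addrC z0.
have upu : u * p * u = q.
  have Ay : A (u * p * u - q) by apply: (A_sub HA) => //; apply: (A_U HA).
  have cy : c * (u * p * u - q) = 0.
    by rewrite mulrBr !mulrA -eecu (I1 pp qq) eecu !mulrA -cq -(mulrA _ u u) uu mulr1 subrr.
  have : u * p * u - q = 0 by apply: killee => //; rewrite eeuc -mulrA cy mulr0.
  by move/eqP; rewrite subr_eq0 => /eqP.
have s1q : (1 - q) * s = s * (1 - q) by rewrite mulrBl mulrBr mul1r mulr1 sq.
have vpv : v * p * v = 1 - q.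
  have A1q : A (1 - q) by apply: (A_sub HA) => //; apply: (A1 HA).
  have Ay : A (v * p * v - (1 - q)) by apply: (A_sub HA) => //; apply: (A_U HA).
  have sy : s * (v * p * v - (1 - q)) = 0.
    by rewrite [LHS]mulrBr !mulrA -ddsv (I3 pp qq) ddsv !mulrA s1q -(mulrA _ v v) vv mulr1 subrr.
  have : v * p * v - (1 - q) = 0 by apply: killdd => //; rewrite ddvs -mulrA sy mulr0.
  by move/eqP; rewrite subr_eq0 => /eqP.
have uq : u * q = p * u by rewrite -upu !mulrA uu mul1r.
have vp : v * p = (1 - q) * v by rewrite -vpv -(mulrA _ v v) vv mulr1.
have u1q : u * (1 - q) = (1 - p) * u by rewrite mulrBr mulrBl mulr1 mul1r uq.
have wp : u * v * p = (1 - p) * (u * v) by rewrite -mulrA vp mulrA u1q -mulrA.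
have pw : p * (u * v) = u * v * (1 - p) by rewrite mulrBr mulr1 wp mulrBl mul1r; abel.
have ww : u * v * (u * v) = -1.
  by rewrite mulrA -(mulrA u v u) vu mulrN mulNr mulrA uu mul1r vv.
have jE : j = u * v * (p - (1 - p)).
  by rewrite /j -(mulrA p v u) vu mulrN pw; rexp; abel.
have [jj jp pj] := jfacts pp ww wp.
rewrite -jE in jj jp pj.
have jcomm : forall d, u * d = d * u -> v * d = d * v -> p * d = d * p -> j * d = d * j.
  by move=> d hu hv hp; rewrite /j mulrDl mulrDr (comm3 hu hv hp) (comm3 hp hv hu).
clearbody j.
have pp1 : (1 - p) * (1 - p) = 1 - p by rexp; rewrite pp; abel.
split.
- case=> ap aq.
  have aee : a * (p - (1 - q)) = (p - (1 - q)) * a by rexp; rewrite ap aq.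
  have add : a * (p - q) = (p - q) * a by rexp; rewrite ap aq.
  have ca : c * a = a * c.
    by apply: cCC => //; rewrite -mulrA -aee mulrA -aee -mulrA.
  have ua : u * a = a * u by apply: uCC => //; rewrite aee.
  have va : v * a = a * v by apply: vCC => //; rewrite add.
  have ja : j * a = a * j by apply: jcomm => //; rewrite ap.
  exists (a * p); split; last split; last split.
  + split; first by apply: (A_mulC HA).
    by rewrite mulrA ca -mulrA cp mulrA.
  + by rewrite -mulrA pp.
  + by rewrite [RHS]mulrA -ap -mulrA pp.
  + rewrite !mulrA ja -(mulrA a j p) jp mulrA -(mulrA _ j j) jj mulr1.
    by rewrite mulrBr mulr1; abel.
- case=> b [[Ab cb] [bp [pb ->]]].
  have bp' : b * p = b by rewrite -bp.
  have pb' : p * b = b by rewrite -pb.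
  have b1p : b * (1 - p) = 0 by rewrite mulrBr mulr1 bp' subrr.
  have p1b : (1 - p) * b = 0 by rewrite mulrBl mul1r pb' subrr.
  split.
  + rewrite mulrDl mulrDr bp' pb'.
    have -> : j * b * j * p = 0.
      by rewrite -(mulrA _ j p) jp mulrA -(mulrA j b) b1p mulr0 mul0r.
    have -> : p * (j * b * j) = 0.
      by rewrite !mulrA pj -(mulrA j) p1b mulr0 mul0r.
    done.
  + have qE : q = c * c * p + c * s * j + s * s * (1 - p).
      rewrite {1}(I11 pp qq) -cc -ss -(I8 pp qq) h1 jE !mulrA.
      done.
    rewrite qE.
    have sb : s * b = b * s.
      apply: sCC => //; apply: (comm_compl (x := (p - q) * (p - q)) (y := (p - (1 - q)) * (p - (1 - q)))).
        by rewrite addrC.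
      by rewrite -cc -mulrA cb mulrA cb mulrA.
    have jc : c * j = j * c by symmetry; apply: jcomm => //; symmetry.
    have js : s * j = j * s by symmetry; apply: jcomm => //; symmetry.
    symmetry; apply: final_comm => //.
    * by rewrite -mulrA cb mulrA cb mulrA.
    * by rewrite -mulrA sb mulrA sb mulrA.
    * by rewrite -mulrA sb mulrA cb mulrA.
    * by rewrite -mulrA jc mulrA jc mulrA.
    * by rewrite -mulrA js mulrA js mulrA.
    * by rewrite -mulrA js mulrA jc mulrA.
Qed.
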